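(* Let $H$ be an $n$-Hilbert space, fix $a_2,\dots,a_n\in H$, let $C\in\mathcal{GB}(H_F)$, and let $\{f_i\}_{i=1}^\infty$ be a $C$-controlled frame associated to $(a_2,\dots,a_n)$ for $H$ with $C$-controlled frame operator $S_C$. Suppose $S_C^{-1}$ commutes with $C$. Then $\{S_C^{-1/2}f_i\}_{i=1}^\infty$ is a $C$-controlled Parseval frame associated to $(a_2,\dots,a_n)$ for $H$.
   Context: Let $n\ge 2$ and let $H$ be a complex $n$-Hilbert space with $n$-inner product $\langle\cdot,\cdot\,|\,\cdot,\dots,\cdot\rangle$ and induced $n$-norm $\|x_1,\dots,x_n\|=\langle x_1,x_1|x_2,\dots,x_n\rangle^{1/2}$. Fix $a_2,\dots,a_n\in H$, put $F=\{a_2,\dots,a_n\}$ and let $L_F$ be its linear span. Then $\langle x,y\rangle_F:=\langle x,y|a_2,\dots,a_n\rangle$ is a semi-inner product on $H$ inducing an inner product on $H/L_F$; identifying $H/L_F$ with an algebraic complement $M_F$ of $L_F$ in $H$, $H_F$ denotes the Hilbert space completion of $M_F$; its inner product and norm are written $\langle f,g|a_2,\dots,a_n\rangle$ and $\|f,a_2,\dots,a_n\|$. $\mathcal{GB}(H_F)$ is the set of bounded linear operators on $H_F$ with bounded inverse. For $C\in\mathcal{GB}(H_F)$, $\{f_i\}$ in $H$ is a $C$-controlled frame associated to $(a_2,\dots,a_n)$ for $H$ if there are $0<A\le B<\infty$ with $A\|f,a_2,\dots,a_n\|^2\le\sum_i\langle f,f_i|a_2,\dots,a_n\rangle\langle Cf_i,f|a_2,\dots,a_n\rangle\le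 B\|f,a_2,\dots,a_n\|^2$ for all $f\in H_F$; it is a $C$-controlled Parseval frame if this holds with $A=B=1$. Its $C$-controlled frame operator is $S_C:H_F\to H_F$, $S_Cf=\sum_i\langle f,f_i|a_2,\dots,a_n\rangle Cf_i$; it satisfies $A\,I\le S_C\le B\,I$, is positive and invertible, and $S_C^{-1/2}$ denotes the positive square root of $S_C^{-1}$. *)

(* Defs.v *)
From mathcomp Require Import all_boot all_order all_algebra.
From mathcomp Require Import fingroup perm complex.
From mathcomp Require Import reals.
Set Implicit Arguments. Unset Strict Implicit. Unset Printing Implicit Defensive.
Import Order.TTheory GRing.Theory Num.Theory.
Local Open Scope ring_scope.

(* Note: the order on R[i] is the partial order of a numClosedFieldType:
   x <= y  iff  y - x is a nonnegative real number. *)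

Section NHilbert.
Variable R : realType.
Local Notation C := R[i].

Section NInner.
Variables (m : nat) (H : lmodType C).
(* ip x y z = < x, y | z_0, ..., z_(m-1) >  (z plays the role of x_2..x_n) *)
Variable ip : H -> H -> ('I_m -> H) -> C.

Definition nip_diag (x : 'I_m.+1 -> H) : C :=
  ip (x ord0) (x ord0) (fun i => x (lift ord0 i)).

Definition lin_dep (x : 'I_m.+1 -> H) : Prop :=
  exists c : 'I_m.+1 -> C, (exists i, c i != 0) /\ \sum_i c i *: x i = 0.

Definition is_n_inner_product : Prop :=
  (forall x, 0 <= nip_diag x) /\
  (forall x, nip_diag x = 0 <-> lin_dep x) /\
  (forall x (s : 'S_m.+1), nip_diag x = nip_diag (fun i => x (s i))) /\
  (forall x y z, ip x y z = (ip y x z)^*) /\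
  (forall (a : C) x y z, ip (a *: x) y z = a * ip x y z) /\
  (forall x x' y z, ip (x + x') y z = ip x y z + ip x' y z).

Definition nnorm (x : H) (z : 'I_m -> H) : C := sqrtC (ip x x z).

Definition n_complete : Prop :=
  forall u : nat -> H,
    (forall z (e : C), 0 < e -> exists N, forall k l, (N <= k)%N -> (N <= l)%N ->
        nnorm (u k - u l) z < e) ->
    exists x, forall z (e : C), 0 < e -> exists N, forall k, (N <= k)%N ->
        nnorm (u k - x) z < e.

(* H is an n-Hilbert space (n = m.+1) *)
Definition is_n_Hilbert : Prop := is_n_inner_product /\ n_complete.
End NInner.

Section Hilbert.
Variables (K : lmodType C) (ipK : K -> K -> C).

Definition normK (x : K) : C := sqrtC (ipK x x).

Definition conv_seq (u : nat -> K) (l : K) : Prop :=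
  forall e : C, 0 < e -> exists N, forall k, (N <= k)%N -> normK (u k - l) < e.

Definition is_Hilbert : Prop :=
  (forall x y, ipK x y = (ipK y x)^*) /\
  (forall (a : C) x y, ipK (a *: x) y = a * ipK x y) /\
  (forall x x' y, ipK (x + x') y = ipK x y + ipK x' y) /\
  (forall x, 0 <= ipK x x) /\
  (forall x, ipK x x = 0 -> x = 0) /\
  (forall u : nat -> K,
         (forall e : C, 0 < e -> exists N, forall k l, (N <= k)%N -> (N <= l)%N ->
             normK (u k - u l) < e) ->
         exists x, conv_seq u x).

Definition series_conv (u : nat -> K) (s : K) : Prop :=
  conv_seq (fun N => \sum_(i < N) u i) s.

Definition cseries_conv (u : nat -> C) (s : C) : Prop :=
  forall e : C, 0 < e -> exists N, forall k, (N <= k)%N ->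
    `|\sum_(i < k) u i - s| < e.

Definition is_linear_op (T : K -> K) : Prop :=
  forall (a : C) x y, T (a *: x + y) = a *: T x + T y.

Definition bounded_op (T : K -> K) : Prop :=
  is_linear_op T /\ exists M : C, 0 <= M /\ forall x, normK (T x) <= M * normK x.

Definition in_GB (T : K -> K) : Prop :=
  bounded_op T /\ exists T' : K -> K,
    [/\ bounded_op T', (forall x, T (T' x) = x) & (forall x, T' (T x) = x)].

Definition controlled_frame (Cop : K -> K) (f : nat -> K) : Prop :=
  exists A B : C, [/\ 0 < A, A <= B &
    forall g, exists s, [/\ cseries_conv (fun i => ipK g (f i) * ipK (Cop (f i)) g) s,
                           A * ipK g g <= s & s <= B * ipK g g]].

Definition controlled_parseval (Cop : K -> K) (f : nat -> K) : Prop :=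
  forall g, exists s, [/\ cseries_conv (fun i => ipK g (f i) * ipK (Cop (f i)) g) s,
                         1 * ipK g g <= s & s <= 1 * ipK g g].

Definition is_frame_operator (Cop : K -> K) (f : nat -> K) (S : K -> K) : Prop :=
  forall g, series_conv (fun i => ipK g (f i) *: Cop (f i)) (S g).

Definition is_pos_sqrt (P Q : K -> K) : Prop :=
  [/\ bounded_op Q, (forall x, 0 <= ipK (Q x) x) & (forall x, Q (Q x) = P x)].
End Hilbert.

(* (K, ipK, j) is (a model of) the Hilbert space H_F associated with
   a = (a_2,...,a_n): j : H -> K is the (linear) canonical map x |-> [x]
   (quotient by L_F, identified with M_F, inside the completion), it
   carries <.,.|a_2,...,a_n> to the inner product of K, and has dense range. *)
Definition is_HF_completion (m : nat) (H : lmodType C)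
    (ip : H -> H -> ('I_m -> H) -> C) (a : 'I_m -> H)
    (K : lmodType C) (ipK : K -> K -> C) (j : H -> K) : Prop :=
  [/\ (forall (c : C) x y, j (c *: x + y) = c *: j x + j y),
      (forall x y, ipK (j x) (j y) = ip x y a) &
      (forall (k : K) (e : C), 0 < e -> exists x, normK ipK (k - j x) < e)].
End NHilbert.

(* Main.v *)
Require Import Defs.
From mathcomp Require Import all_boot all_order all_algebra.
From mathcomp Require Import complex.
From mathcomp Require Import reals.
From mathcomp Require Import ring.
Set Implicit Arguments. Unset Strict Implicit. Unset Printing Implicit Defensive.
Import Order.TTheory GRing.Theory Num.Theory.
Local Open Scope ring_scope.



Definition sesq (R : realType) (K : lmodType R[i]) (w : K -> K -> R[i]) :=
  [/\ forall x y, w x y = (w y x)^*,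
      forall (a : R[i]) x y, w (a *: x) y = a * w x y &
      forall x x' y, w (x + x') y = w x y + w x' y].

Section Sesq.
Variable R : realType.
Local Notation C := R[i].
Variable K : lmodType C.
Variable w : K -> K -> C.
Hypothesis hw : sesq w.

Lemma wC x y : w x y = (w y x)^*. Proof. by case: hw. Qed.
Lemma wZ (a : C) x y : w (a *: x) y = a * w x y. Proof. by case: hw. Qed.
Lemma wD x x' y : w (x + x') y = w x y + w x' y. Proof. by case: hw. Qed.

Lemma w0l y : w 0 y = 0.
Proof. by rewrite -(scale0r (0 : K)) wZ mul0r. Qed.
Lemma wNl x y : w (- x) y = - w x y.
Proof. by rewrite -scaleN1r wZ mulN1r. Qed.
Lemma wBl x x' y : w (x - x') y = w x y - w x' y.
Proof. by rewrite wD wNl. Qed.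
Lemma wDr x y y' : w x (y + y') = w x y + w x y'.
Proof. by rewrite wC wD rmorphD /= -!wC. Qed.
Lemma wZr (a : C) x y : w x (a *: y) = a^* * w x y.
Proof. by rewrite wC wZ rmorphM /= -wC. Qed.
Lemma w0r x : w x 0 = 0.
Proof. by rewrite wC w0l rmorph0. Qed.
Lemma wNr x y : w x (- y) = - w x y.
Proof. by rewrite wC wNl rmorphN /= -wC. Qed.
Lemma wBr x y y' : w x (y - y') = w x y - w x y'.
Proof. by rewrite wDr wNr. Qed.
Lemma wsuml n (F : 'I_n -> K) y : w (\sum_(i < n) F i) y = \sum_(i < n) w (F i) y.
Proof.
elim: n F => [|n IH] F; first by rewrite !big_ord0 w0l.
by rewrite !big_ord_recr /= wD IH.
Qed.
End Sesq.



Section IP.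
Variable R : realType.
Local Notation C := R[i].
Variable K : lmodType C.
Variable ip : K -> K -> C.
Hypothesis hip : sesq ip.
Hypothesis ip_ge0 : forall x, 0 <= ip x x.
Hypothesis ip_eq0 : forall x, ip x x = 0 -> x = 0.

Local Notation nK := (normK ip).

Lemma nK_ge0 x : 0 <= nK x.
Proof. by rewrite /normK sqrtC_ge0. Qed.
Lemma nK_sqr x : nK x ^+ 2 = ip x x.
Proof. by rewrite /normK sqrtCK. Qed.

Lemma real_ge0 (z : C) : 0 <= z -> z^* = z.
Proof. by move=> h; apply: conj_Creal; rewrite ger0_real. Qed.

Lemma CS x y : `|ip x y| <= nK x * nK y.
Proof.
have [->|yn0] := eqVneq y 0.
  by rewrite (w0r hip) normr0 mulr_ge0 // nK_ge0.
set v := ip y y.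
have v0 : 0 < v.
  rewrite lt_def ip_ge0 andbT; apply/eqP => /ip_eq0 h; by rewrite h eqxx in yn0.
have vr : v^* = v by rewrite real_ge0 // ltW.
set a := ip x y.
have yx : ip y x = a^* by rewrite (wC hip).
pose l := a / v.
have h := ip_ge0 (x - l *: y).
rewrite (wBl hip) !(wBr hip) !(wZ hip) !(wZr hip) -/a -/v yx in h.
have lc : l^* = a^* / v by rewrite /l rmorphM /= fmorphV /= vr.
rewrite lc in h.
have e : ip x x - a^* / v * a - (l * a^* - l * (a^* / v * v)) = ip x x - a * a^* / v.
  rewrite /l; field; exact: lt0r_neq0.
rewrite e subr_ge0 ler_pdivrMr // in h.
rewrite -normCK in h.
rewrite -(@ler_pXn2r _ 2) //; last 2 first.
- by rewrite nnegrE.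
- by rewrite nnegrE mulr_ge0 // nK_ge0.
by rewrite exprMn !nK_sqr.
Qed.

Lemma selfadj (T : K -> K) : (forall (a : C) x y, T (a *: x + y) = a *: T x + T y) ->
  (forall x, 0 <= ip (T x) x) -> forall x y, ip (T x) y = ip x (T y).
Proof.
move=> Tl Tp x y.
have T0 : T 0 = 0.
  by have := Tl (-1) 0 0; rewrite scaler0 add0r scaleN1r addNr.
have TD u v : T (u + v) = T u + T v by have := Tl 1 u v; rewrite !scale1r.
have TZ (c : C) u : T (c *: u) = c *: T u by rewrite -[c *: u]addr0 Tl T0 addr0.
set a := ip (T x) y. set b := ip (T y) x.
have ex := real_ge0 (Tp x). have ey := real_ge0 (Tp y).
have e1 : a + b = ip (T (x + y)) (x + y) - ip (T x) x - ip (T y) y.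
  rewrite TD !(wD hip) !(wDr hip) -/a -/b; ring.
have e2 : - 'i * a + 'i * b = ip (T (x + 'i *: y)) (x + 'i *: y) - ip (T x) x - ip (T y) y.
  rewrite TD TZ !(wD hip) !(wDr hip) !(wZ hip) !(wZr hip) -/a -/b conjCi.
  rewrite mulrA mulrN -expr2 sqrCi opprK mul1r; ring.
have eq1 : a^* + b^* = a + b.
  have h : (a + b)^* = a + b. by rewrite e1 !rmorphB /= !real_ge0.
  by rewrite -h rmorphD.
have eq2 : a^* - b^* = b - a.
  have r := real_ge0 (Tp (x + 'i *: y)).
  have : (- 'i * a + 'i * b)^* = - 'i * a + 'i * b by rewrite e2 !rmorphB /= r ex ey.
  rewrite !rmorphD !rmorphM /= rmorphN /= conjCi opprK => h.
  apply: (mulfI (neq0Ci R[i])).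
  rewrite mulrBr mulrBr; apply: (addrI (- 'i * b^*)); move: h => h; congr (_ + _).
  by transitivity ('i * a^* + - 'i * b^*); [ring | rewrite h; ring].
have hb : b = a^*.
  have two : (2:C) != 0 by rewrite pnatr_eq0.
  apply: (mulfI two).
  have -> : 2 * b = (a + b) + (b - a) by ring.
  rewrite -eq1 -eq2; ring.
by rewrite (wC hip) -/b hb conjCK.
Qed.
End IP.



Lemma archC (R : realType) (t : R[i]) : 0 <= t -> exists N : nat, t < N%:R.
Proof.
move=> t0.
have tr : t \is Num.real by rewrite ger0_real.
have := t0; rewrite lecE => /andP [_ h0].
exists (Num.Def.archi_bound (complex.Re t)).
rewrite -(RRe_real tr) -[X in _ < X](rmorph_nat (real_complex R)).
by rewrite ltcR archi_boundP.
Qed.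

Fixpoint Bseq (R : realType) (K : lmodType R[i]) (c : R[i]) (Q : K -> K) (n : nat) : K -> K :=
  match n with
  | 0 => fun u => c *: Q u
  | n'.+1 => fun u => Bseq c Q n' u - Bseq c Q n' (Bseq c Q n' u)
  end.

Section Form.
Variable R : realType.
Local Notation C := R[i].
Variable K : lmodType C.
Variable ip : K -> K -> C.
Hypothesis hip : sesq ip.
Hypothesis ip_ge0 : forall x, 0 <= ip x x.
Hypothesis ip_eq0 : forall x, ip x x = 0 -> x = 0.
Local Notation nK := (normK ip).
Variable Q : K -> K.
Hypothesis Ql : forall (a : C) x y, Q (a *: x + y) = a *: Q x + Q y.
Hypothesis Qp : forall x, 0 <= ip (Q x) x.
Variable MQ : C.
Hypothesis MQ0 : 0 <= MQ.
Hypothesis Qb : forall x, nK (Q x) <= MQ * nK x.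
Variable w : K -> K -> C.
Hypothesis hw : sesq w.
Hypothesis wpsd : forall u, 0 <= w u u.
Hypothesis wQ : forall u v, w (Q u) v = w u (Q v).

Let c : C := (MQ + 1)^-1.
Let c0 : 0 < c. Proof. by rewrite invr_gt0 ltr_wpDl. Qed.
Let cr : c^* = c. Proof. by rewrite real_ge0 // ltW. Qed.
Local Notation B := (Bseq c Q).

Lemma Bprops n :
  [/\ forall (a : C) u v, B n (a *: u + v) = a *: B n u + B n v,
      forall u v, ip (B n u) v = ip u (B n v),
      forall u v, w (B n u) v = w u (B n v),
      forall u, 0 <= ip (B n u) u &
      forall u, ip (B n u) u <= ip u u].
Proof.
have QsA := selfadj hip Ql Qp.
elim: n => [|n [Bl Bs Bw B0 B1]].
  split => /=.
  - by move=> a u v; rewrite Ql scalerDr !scalerA mulrC.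
  - by move=> u v; rewrite (wZ hip) (wZr hip) cr QsA.
  - by move=> u v; rewrite (wZ hw) (wZr hw) cr wQ.
  - by move=> u; rewrite (wZ hip) mulr_ge0 // ltW.
  - move=> u; rewrite (wZ hip).
    have h1 : ip (Q u) u <= MQ * ip u u.
      rewrite -(ger0_norm (Qp u)); apply: le_trans (CS hip ip_ge0 ip_eq0 _ _) _.
      rewrite -nK_sqr expr2 mulrA ler_wpM2r ?nK_ge0 //.
    rewrite ler_pdivrMl ?ltr_wpDl //; apply: le_trans h1 _.
    by rewrite ler_wpM2r // lerDl.
have BD u v : B n (u + v) = B n u + B n v by have := Bl 1 u v; rewrite !scale1r.
have B00 : B n 0 = 0 by have := Bl (-1) 0 0; rewrite scaler0 add0r scaleN1r addNr.
have BZ (a : C) u : B n (a *: u) = a *: B n u by have := Bl a u 0; rewrite !addr0 B00 addr0.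
have BN u : B n (- u) = - B n u by rewrite -scaleN1r BZ scaleN1r.
have BB u v : B n (u - v) = B n u - B n v by rewrite BD BN.
split => /=.
- by move=> a u v; rewrite Bl BD BZ opprD scalerBr addrACA.
- by move=> u v; rewrite (wBl hip) (wBr hip) !Bs.
- by move=> u v; rewrite (wBl hw) (wBr hw) !Bw.
- move=> u; rewrite (wBl hip).
  set y := B n u.
  have e : ip y u - ip (B n y) u = (ip y y - ip (B n y) y) + ip (B n (u - y)) (u - y).
    rewrite BB (wBl hip) !(wBr hip) Bs -/y; ring.
  by rewrite e addr_ge0 // ?subr_ge0 ?B1 ?B0.
- move=> u; rewrite (wBl hip) [ip (B n (B n u)) u]Bs -subr_ge0.
  have e : ip u u - (ip (B n u) u - ip (B n u) (B n u)) = (ip u u - ip (B n u) u) + ip (B n u) (B n u) by ring.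
  by rewrite e addr_ge0 // subr_ge0.
Qed.

Lemma tele_ip x n : ip (B 0 x) x = \sum_(k < n) ip (B k x) (B k x) + ip (B n x) x.
Proof.
elim: n => [|n IH]; first by rewrite big_ord0 add0r.
have [_ Bs _ _ _] := Bprops n.
by rewrite big_ord_recr /= IH (wBl hip) [ip (B n (B n x)) x]Bs; ring.
Qed.

Lemma tele_w x n : w (B 0 x) x = \sum_(k < n) w (B k x) (B k x) + w (B n x) x.
Proof.
elim: n => [|n IH]; first by rewrite big_ord0 add0r.
have [_ _ Bw _ _] := Bprops n.
by rewrite big_ord_recr /= IH (wBl hw) [w (B n (B n x)) x]Bw; ring.
Qed.

Hypothesis wb : forall x, exists2 D, 0 <= D & forall u, `|w u x| <= D * nK u.

Lemma form_zero x q : 0 <= q -> w (Q x) x = - q -> q = 0.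
Proof.
move=> q0 e.
have [D D0 hD] := wb x.
case: (eqVneq q 0) => // qn0.
have qp : 0 < q by rewrite lt_def qn0 q0.
exfalso.
have D1 : 0 < D + 1 by rewrite ltr_wpDl.
set eta := c * q / (D + 1).
have eta0 : 0 < eta by rewrite /eta divr_gt0 // mulr_gt0.
have eta2 : 0 < eta ^+ 2 by rewrite exprn_gt0.
have [N hN] := @archC R (ip x x / eta ^+ 2) (divr_ge0 (ip_ge0 x) (ltW eta2)).
rewrite ltr_pdivrMr // in hN.
have [k hk] : exists k : 'I_N, ip (B k x) (B k x) < eta ^+ 2.
  case: (boolP [exists k : 'I_N, ip (B k x) (B k x) < eta ^+ 2]) => [/existsP // | /existsPn hall].
  exfalso.
  have hle : \sum_(k < N) eta ^+ 2 <= \sum_(k < N) ip (B k x) (B k x).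
    apply: ler_sum => k _; have := hall k.
    by rewrite real_ltNge ?negbK // ger0_real // ?ltW // ip_ge0.
  rewrite sumr_const card_ord -mulr_natl in hle.
  have [_ _ _ B0 B1] := Bprops N.
  have [_ _ _ _ B10] := Bprops 0.
  have hs : \sum_(k < N) ip (B k x) (B k x) <= ip x x.
    apply: le_trans (B10 x); rewrite (tele_ip x N) lerDl; exact: B0.
  have := lt_le_trans hN (le_trans hle hs); by rewrite ltxx.
have nk : nK (B k x) < eta.
  rewrite -(@ltr_pXn2r _ 2) // ?nnegrE ?nK_ge0 ?ltW // nK_sqr //.
have ew := tele_w x k.
rewrite /= (wZ hw) e -/(B 0 x) in ew.
set S := \sum_(j < k) w (B j x) (B j x) in ew.
have S0 : 0 <= S by apply: sumr_ge0 => j _; exact: wpsd.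
have h1 : c * q <= `|w (B k x) x|.
  have -> : w (B k x) x = - (c * q + S).
    have ew' : w (B k x) x = c * - q - S by rewrite ew (addrC S) addrK.
    rewrite ew'; ring.
  by rewrite normrN ger0_norm ?lerDl // addr_ge0 // mulr_ge0 // ltW.
have h2 : `|w (B k x) x| < c * q.
  apply: le_lt_trans (hD _) _.
  apply: (@le_lt_trans _ _ ((D + 1) * nK (B k x))).
    by rewrite ler_wpM2r ?nK_ge0 // lerDl.
  have -> : c * q = (D + 1) * eta by rewrite /eta; field; exact: lt0r_neq0.
  by rewrite ltr_pM2l.
by have := le_lt_trans h1 h2; rewrite ltxx.
Qed.
End Form.



Lemma lin_props (R : realType) (K : lmodType R[i]) (T : K -> K) :
  (forall (a : R[i]) x y, T (a *: x + y) = a *: T x + T y) ->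
  [/\ T 0 = 0, forall x y, T (x + y) = T x + T y, forall (a : R[i]) x, T (a *: x) = a *: T x,
      forall x, T (- x) = - T x & forall x y, T (x - y) = T x - T y].
Proof.
move=> Tl.
have T0 : T 0 = 0 by have := Tl (-1) 0 0; rewrite scaler0 add0r scaleN1r addNr.
have TD x y : T (x + y) = T x + T y by have := Tl 1 x y; rewrite !scale1r.
have TZ (a : R[i]) x : T (a *: x) = a *: T x by have := Tl a x 0; rewrite !addr0 T0 addr0.
have TN x : T (- x) = - T x by rewrite -scaleN1r TZ scaleN1r.
by split => // x y; rewrite TD TN.
Qed.

Section Comm.
Variable R : realType.
Local Notation C := R[i].
Variable K : lmodType C.
Variable ip : K -> K -> C.
Hypothesis hip : sesq ip.
Hypothesis ip_ge0 : forall x, 0 <= ip x x.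
Hypothesis ip_eq0 : forall x, ip x x = 0 -> x = 0.
Local Notation nK := (normK ip).
Variables Q Cop : K -> K.
Hypothesis Ql : forall (a : C) x y, Q (a *: x + y) = a *: Q x + Q y.
Hypothesis Qp : forall x, 0 <= ip (Q x) x.
Variable MQ : C.
Hypothesis MQ0 : 0 <= MQ.
Hypothesis Qb : forall x, nK (Q x) <= MQ * nK x.
Hypothesis Cl : forall (a : C) x y, Cop (a *: x + y) = a *: Cop x + Cop y.
Variable MC : C.
Hypothesis MC0 : 0 <= MC.
Hypothesis Cb : forall x, nK (Cop x) <= MC * nK x.
Hypothesis hPC : forall x, Q (Q (Cop x)) = Cop (Q (Q x)).

Lemma sqrt_comm x : Q (Q (Cop x)) = Q (Cop (Q x)).
Proof.
have [Q0 QD QZ QN QB] := lin_props Ql.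
have [C0 CD CZ CN CB] := lin_props Cl.
have QsA := selfadj hip Ql Qp.
pose X u := Q (Cop u) - Cop (Q u).
have XD u v : X (u + v) = X u + X v.
  by rewrite /X QD CD QD CD opprD addrACA.
have XZ (a : C) u : X (a *: u) = a *: X u by rewrite /X CZ QZ QZ CZ scalerBr.
have XQ u : X (Q u) = - Q (X u) by rewrite /X QB hPC opprB.
pose w u v := ip (Q (X u)) (X v).
have hw : sesq w.
  split => [u v|a u v|u u' v]; rewrite /w.
  - by rewrite QsA (wC hip).
  - by rewrite XZ QZ (wZ hip).
  - by rewrite XD QD (wD hip).
have wpsd u : 0 <= w u u by exact: Qp.
have wQf u v : w (Q u) v = - ip (Q (X u)) (Q (X v)).
  by rewrite /w XQ QN (wNl hip) QsA.
have wQ u v : w (Q u) v = w u (Q v).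
  by rewrite wQf /w XQ (wNr hip).
have nKm (M : C) a b : 0 <= M -> nK a <= M * nK b -> forall N, 0 <= N -> M * nK b <= N -> nK a <= N.
  by move=> _ h N _ h2; exact: le_trans h h2.
have wb : forall x, exists2 D, 0 <= D & forall u, `|w u x| <= D * nK u.
  move=> y; exists ((MQ * (MQ * MC) + MQ * (MC * MQ)) * nK (X y)).
    by rewrite mulr_ge0 ?nK_ge0 // addr_ge0 // !mulr_ge0.
  move=> u; rewrite /w /X QB (wBl hip).
  apply: le_trans (ler_normB _ _) _.
  have h1 : nK (Q (Q (Cop u))) <= MQ * (MQ * (MC * nK u)).
    apply: le_trans (Qb _) _; rewrite ler_wpM2l //.
    apply: le_trans (Qb _) _; rewrite ler_wpM2l //.
  have h2 : nK (Q (Cop (Q u))) <= MQ * (MC * (MQ * nK u)).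
    apply: le_trans (Qb _) _; rewrite ler_wpM2l //.
    apply: le_trans (Cb _) _; rewrite ler_wpM2l //.
  have e : (MQ * (MQ * MC) + MQ * (MC * MQ)) * nK (X y) * nK u =
     MQ * (MQ * (MC * nK u)) * nK (X y) + MQ * (MC * (MQ * nK u)) * nK (X y) by ring.
  rewrite e.
  apply: lerD; (apply: le_trans (CS hip ip_ge0 ip_eq0 _ _) _; rewrite ler_wpM2r ?nK_ge0 //).
have := form_zero hip ip_ge0 ip_eq0 Ql Qp MQ0 Qb hw wpsd wQ wb (ip_ge0 (Q (X x))) (wQf x x).
move/ip_eq0; rewrite /X QB => /eqP; rewrite subr_eq0 => /eqP.
done.
Qed.
End Comm.

Unset Implicit Arguments. Set Strict Implicit.


Theorem theorem3p7 (R : realType) (m : nat) (Hm : (1 <= m)%N)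
  (H : lmodType R[i]) (ip : H -> H -> ('I_m -> H) -> R[i])
  (hH : is_n_Hilbert ip)
  (a : 'I_m -> H)
  (K : lmodType R[i]) (ipK : K -> K -> R[i]) (hK : is_Hilbert ipK)
  (j : H -> K) (hj : is_HF_completion ip a ipK j)
  (Cop : K -> K) (hC : in_GB ipK Cop)
  (f : nat -> H) (hf : controlled_frame ipK Cop (fun i => j (f i)))
  (S : K -> K) (hS : is_frame_operator ipK Cop (fun i => j (f i)) S)
  (Sinv : K -> K) (hSinv1 : forall x, S (Sinv x) = x) (hSinv2 : forall x, Sinv (S x) = x)
  (hcomm : forall x, Sinv (Cop x) = Cop (Sinv x))
  (Shalf : K -> K) (hhalf : is_pos_sqrt ipK Sinv Shalf) :
  controlled_parseval ipK Cop (fun i => Shalf (j (f i))).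
Proof.
case: hK => ipC [ipZ [ipD [ip_ge0 [ip_eq0 _]]]].
have hip : sesq ipK by split.
case: hC => [[Cl [MC [MC0 Cb]]] _].
case: hhalf => [[Ql [MQ [MQ0 Qb]]] Qp Qsq].
set Q := Shalf in Ql Qb Qp Qsq *.
have QsA := selfadj hip Ql Qp.
have hPC x : Q (Q (Cop x)) = Cop (Q (Q x)) by rewrite !Qsq hcomm.
have sc := sqrt_comm hip ip_ge0 ip_eq0 Ql Qp MQ0 Qb Cl MC0 Cb hPC.
have CQ u : Cop (Q u) = Q (Cop u).
  have hv : Q (Q (S u)) = u by rewrite Qsq hSinv2.
  move: (Q (S u)) hv => v <-.
  by rewrite -sc !Qsq hcomm.
have QS y : Q (S y) = S (Q y).
  have e : Q y = Sinv (Q (S y)) by rewrite -Qsq -[in LHS](hSinv2 y) -Qsq.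
  by rewrite e hSinv1.
move=> g.
exists (ipK g g); split; rewrite ?mul1r //.
set h := Q g.
have es : ipK g g = ipK (S h) h by rewrite /h -QsA QS Qsq hSinv1.
have et i : ipK g (Q (j (f i))) * ipK (Cop (Q (j (f i)))) g
    = ipK h (j (f i)) * ipK (Cop (j (f i))) h by rewrite /h QsA CQ QsA.
move=> e e0.
have n1 : 0 < normK ipK h + 1 by rewrite ltr_wpDl // nK_ge0.
have [N hN] := hS h (e / (normK ipK h + 1)) (divr_gt0 e0 n1).
exists N => k Nk.
under eq_bigr do rewrite et.
have -> : \sum_(i < k) ipK h (j (f i)) * ipK (Cop (j (f i))) h
   = ipK (\sum_(i < k) ipK h (j (f i)) *: Cop (j (f i))) h.
  by rewrite (wsuml hip); apply: eq_bigr => i _; rewrite (wZ hip).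
rewrite es -(wBl hip).
apply: le_lt_trans (CS hip ip_ge0 ip_eq0 _ _) _.
apply: (@le_lt_trans _ _ (normK ipK (\sum_(i < k) ipK h (j (f i)) *: Cop (j (f i)) - S h) * (normK ipK h + 1))).
  by rewrite ler_wpM2l ?nK_ge0 // lerDl.
by rewrite -ltr_pdivlMr // hN.
Qed.
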